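(* Let $G$ be a simple graph with $n$ vertices $v_1,\dots,v_n$ and $m\ge1$ edges, where $d_i$ is the degree of $v_i$. Then $$\mathcal E(G)\ge\frac{2m}{\sqrt{\max_{1\le i\le n}\sum_{j:\,v_i\sim v_j}d_j}}.$$
   Context: The adjacency matrix of $G$ is $\mathrm{Adj}(G)=[a_{ij}]$ with $a_{ij}=1$ if $v_i$ is adjacent to $v_j$ (written $v_i\sim v_j$) and $0$ otherwise. If $\lambda_1(G),\dots,\lambda_n(G)$ are the eigenvalues of $\mathrm{Adj}(G)$, the energy of $G$ is $\mathcal E(G)=\sum_{i=1}^n|\lambda_i(G)|$. *)

(* Defs.v *)
From mathcomp Require Import all_boot all_order all_algebra all_field.
Set Implicit Arguments. Unset Strict Implicit. Unset Printing Implicit Defensive.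
Import Order.TTheory GRing.Theory Num.Theory.
Local Open Scope ring_scope.

Definition simple_graph (n : nat) (e : rel 'I_n) : Prop :=
  symmetric e /\ irreflexive e.

Definition degree (n : nat) (e : rel 'I_n) (i : 'I_n) : nat := #|[set j | e i j]|.

Definition edges (n : nat) (e : rel 'I_n) : {set {set 'I_n}} :=
  [set E : {set 'I_n} | [exists i, exists j, e i j && (E == [set i; j])]].

Definition nedges (n : nat) (e : rel 'I_n) : nat := #|edges e|.

Definition adj (n : nat) (e : rel 'I_n) : 'M[algC]_n :=
  \matrix_(i, j) (e i j)%:R.

(* energy: sum of absolute values of the eigenvalues (with multiplicity).
   [rs] is a list of eigenvalues with multiplicity iff the characteristic
   polynomial factors as prod (X - r). *)
Definition eigenvalue_list (n : nat) (A : 'M[algC]_n) (rs : seq algC) : Prop :=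
  char_poly A = \prod_(r <- rs) ('X - r%:P).

Definition energy_of (rs : seq algC) : algC := \sum_(r <- rs) `|r|.

Definition nbr_deg_sum (n : nat) (e : rel 'I_n) (i : 'I_n) : nat :=
  \sum_(j | e i j) degree e j.

(* Main.v *)
Require Import Defs.
From mathcomp Require Import all_boot all_order all_algebra all_field.
Import Order.TTheory GRing.Theory Num.Theory.
Local Open Scope ring_scope.

Lemma char_poly_conj (R : comUnitRingType) n (A P : 'M[R]_n) :
  P \in unitmx -> char_poly (P *m A *m invmx P) = char_poly A.
Proof.
move=> Pu; rewrite /char_poly.
have -> : char_poly_mx (P *m A *m invmx P) =
   map_mx polyC P *m char_poly_mx A *m map_mx polyC (invmx P).
  rewrite /char_poly_mx !map_mxM mulmxBr mulmxBl -!mulmxA -!map_mxM.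
  congr (_ - _); rewrite -scalar_mxC mulmxA -map_mxM mulmxV // map_mx1 mul1mx //.
rewrite !det_mulmx !det_map_mx mulrC mulrA -rmorphM -det_mulmx.
by rewrite mulVmx // det1 rmorph1 mul1r.
Qed.
Lemma sum_sq_eig n (A : 'M[algC]_n) (rs : seq algC) : (0 < n)%N ->
  char_poly A = \prod_(r <- rs) ('X - r%:P) ->
  \sum_(r <- rs) r ^+ 2 = \tr (A *m A).
Proof.
move=> n0 hA.
have [P /unitarymx_unit Pu] := Schur A n0.
rewrite /similar_to /conjmx pinvmxE //.
set T := P *m A *m invmx P => Ttrig.
have hT := char_poly_trig Ttrig.
rewrite char_poly_conj // hA in hT.
have : perm_eq rs [seq T i i | i <- index_enum 'I_n].
  by apply: prod_XsubC_eq; rewrite hT big_map.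
move=> hp; rewrite (perm_big _ hp) big_map.
have -> : A *m A = invmx P *m (T *m T) *m P.
  by rewrite /T -!mulmxA !mulKmx // !mulmxA mulmxKV // mulmxKV.
rewrite mxtrace_mulC mulmxA mulmxV // mul1mx /mxtrace.
move/is_trig_mxP: Ttrig => Tt.
apply: eq_bigr => i _; rewrite [RHS]mxE (bigD1 i) //= big1 ?addr0 //; last first.
  move=> k ki.
case: (ltngtP i k) => [ik|ki'|/val_inj e]; last by rewrite e eqxx in ki.
  by rewrite Tt // mul0r.
  by rewrite (Tt k i) // mulr0.

Qed.
Lemma card_sumb (T : finType) (A : {set T}) : #|A| = (\sum_x (x \in A : nat))%N.
Proof. by rewrite -sum1_card big_mkcond; apply: eq_bigr => x _; case: (x \in A). Qed.

Lemma deg_sum n (e : rel 'I_n) i : degree e i = (\sum_j (e i j : nat))%N.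
Proof. by rewrite /degree card_sumb; apply: eq_bigr => j _; rewrite inE. Qed.

Lemma handshake n (e : rel 'I_n) : simple_graph e ->
  (2 * nedges e <= \sum_i degree e i)%N.
Proof.
move=> [esym eirr].
pose S1 := [set p : 'I_n * 'I_n | e p.1 p.2 && (p.1 < p.2)%N].
pose S2 := [set p : 'I_n * 'I_n | e p.1 p.2 && (p.2 < p.1)%N].
have h1 : (nedges e <= #|S1|)%N.
  apply: leq_trans (leq_imset_card (fun p : 'I_n * 'I_n => [set p.1; p.2]) S1).
  apply: subset_leq_card; apply/subsetP => E; rewrite inE.
  move=> /existsP [i /existsP [j /andP [eij /eqP ->]]].
  case: (ltngtP i j) => [ij|ji|ij].
  - by apply/imsetP; exists (i, j); [rewrite /S1 inE /= eij ij|].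
  - by apply/imsetP; exists (j, i); [rewrite /S1 inE /= esym eij ji| rewrite /= setUC].
  - by move/val_inj: ij eij => ->; rewrite eirr.
have h2 : #|S2| = #|S1|.
  have -> : S2 = (fun p : 'I_n * 'I_n => (p.2, p.1)) @: S1.
    apply/setP => [[a b]]; rewrite /S2 inE /=; apply/idP/imsetP.
      by move=> /andP [hab hba]; exists (b, a); rewrite // /S1 inE /= esym hab hba.
    by move=> [[c d]]; rewrite /S1 inE /= => hcd [-> ->]; rewrite esym.
  by apply: card_imset => [[a b] [c d]] /= [-> ->].
have h3 : (\sum_i degree e i = #|S1| + #|S2|)%N.
  under eq_bigr do rewrite deg_sum.
  rewrite pair_bigA /= !card_sumb -big_split /=; apply: eq_bigr => [[i j]] _.
  rewrite /S1 /S2 !inE /=; case: (ltngtP i j) => [ij|ji|ij].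
  - by rewrite andbT andbF addn0.
  - by rewrite andbT andbF.
  - by move/val_inj: ij => ->; rewrite eirr.
by rewrite h3 h2 mul2n -addnn leq_add.
Qed.

Lemma adj2E n (e : rel 'I_n) i j :
  (adj e *m adj e) i j = (\sum_k (e i k * e k j)%N)%N%:R.
Proof.
rewrite mxE natr_sum; apply: eq_bigr => k _; rewrite !mxE natrM //.
Qed.

Lemma adj2_rowsum n (e : rel 'I_n) i :
  (\sum_j (\sum_k (e i k * e k j)%N)%N = nbr_deg_sum e i)%N.
Proof.
rewrite exchange_big /nbr_deg_sum [RHS]big_mkcond /=; apply: eq_bigr => k _.
rewrite -big_distrr /= deg_sum; case: (e i k) => //=; rewrite ?mul1n ?mul0n //.
Qed.

Lemma tr_adj2 n (e : rel 'I_n) : simple_graph e ->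
  \tr (adj e *m adj e) = (\sum_i degree e i)%N%:R.
Proof.
move=> [esym _]; rewrite /mxtrace natr_sum; apply: eq_bigr => i _.
rewrite adj2E deg_sum; congr (_%:R); apply: eq_bigr => j _.
by rewrite (esym j i); case: (e i j).
Qed.

Lemma eig_bound n (e : rel 'I_n) (r : algC) :
  root (char_poly (adj e)) r ->
  `|r| ^+ 2 <= (\max_(i < n) nbr_deg_sum e i)%N%:R.
Proof.
rewrite -eigenvalue_root_char => /eigenvalueP [v hv vn0].
set M := (\max_(i < n) nbr_deg_sum e i)%N.
have hv2 : v *m (adj e *m adj e) = r ^+ 2 *: v.
  by rewrite mulmxA hv -scalemxAl hv scalerA -expr2.
pose S := \sum_j `|v 0 j|.
have hj : forall j, `|r| ^+ 2 * `|v 0 j| <= \sum_i `|v 0 i| * (\sum_k (e i k * e k j)%N)%N%:R.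
  move=> j; have := congr1 (fun w : 'rV_n => w 0 j) hv2; rewrite /= !mxE => h.
  rewrite -normrX -normrM -h; apply: le_trans (ler_norm_sum _ _ _) _.
  apply: ler_sum => i _; rewrite adj2E normrM normr_nat //.
have hS : `|r| ^+ 2 * S <= M%:R * S.
  rewrite /S !mulr_sumr; apply: le_trans (ler_sum _ (fun j _ => hj j)) _.
  rewrite exchange_big /=; apply: ler_sum => i _.
  rewrite -mulr_sumr -natr_sum adj2_rowsum mulrC ler_wpM2r //.
  by rewrite ler_nat; apply: (leq_bigmax_cond i).
have S0 : 0 < S.
  rewrite lt_def sumr_ge0 ?andbT //; apply/negP => /eqP/psumr_eq0P h.
  move/negP: vn0; apply; apply/eqP/rowP => j; rewrite mxE.
  by apply/eqP; rewrite -normr_eq0 h.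
by rewrite -(ler_pM2r S0).
Qed.

Theorem theorem5p1 (n : nat) (e : rel 'I_n) (rs : seq algC) :
  simple_graph e ->
  (1 <= nedges e)%N ->
  eigenvalue_list (adj e) rs ->
  energy_of rs >=
    (2 * nedges e)%:R / sqrtC ((\max_(i < n) nbr_deg_sum e i)%N)%:R.
Proof.
move=> sg m1 hA.
set M := (\max_(i < n) nbr_deg_sum e i)%N.
set s := sqrtC M%:R.
have s0 : 0 <= s by rewrite sqrtC_ge0 ler0n.
have hbound : forall r, r \in rs -> `|r| <= s.
  move=> r rin.
  have hr : root (char_poly (adj e)) r by rewrite hA root_prod_XsubC.
  have := eig_bound _ _ _ hr; rewrite -/M => h.
  rewrite -(sqrCK (normr_ge0 r)) /s ler_sqrtC // qualifE /=.
  by rewrite exprn_ge0.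
  by rewrite ler0n.

have n0 : (0 < n)%N.
  move: m1; rewrite /nedges => /card_gt0P [E]; rewrite inE => /existsP [i _].
  exact: (leq_ltn_trans (leq0n i) (ltn_ord i)).
have hsum := sum_sq_eig _ _ _ n0 hA; rewrite tr_adj2 // in hsum.
have h2m : (2 * nedges e)%:R <= \sum_(r <- rs) `|r| ^+ 2.
  apply: le_trans (_ : `|\sum_(r <- rs) r ^+ 2| <= _).
    by rewrite hsum normr_nat ler_nat; apply: handshake.
  apply: le_trans (ler_norm_sum _ _ _) _.
  by apply: ler_sum => x _; rewrite normrX.
have hE : \sum_(r <- rs) `|r| ^+ 2 <= energy_of rs * s.
  rewrite /energy_of mulr_suml big_seq [X in _ <= X]big_seq; apply: ler_sum => x xin.
  by rewrite expr2 ler_wpM2l // hbound.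
have [M0|M0] := eqVneq M 0%N.
  rewrite /s M0 sqrtC0 invr0 mulr0 /energy_of; apply: sumr_ge0 => x _.
  exact: normr_ge0.
have sp : 0 < s by rewrite sqrtC_gt0 ltr0n lt0n.
rewrite ler_pdivrMr //; exact: le_trans h2m hE.
Qed.
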